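(* Let $f\colon\{0,\dots,n\}\to\mathbb{Z}$ be $\Delta_f$-near concave and $g\colon\{0,\dots,m\}\to\mathbb{Z}$ be $\Delta_g$-near concave. Then the max-plus convolution $h\colon\{0,\dots,n+m\}\to\mathbb{Z}$, $h(k)=\max_{i+j=k}f(i)+g(j)$, is $\max\{\Delta_f,\Delta_g\}$-near concave.
   Context: A function $F\colon\{0,\dots,n\}\to\mathbb{Q}$ is convex if $F(i)-F(i-1)\le F(i+1)-F(i)$ for all $1\le i\le n-1$, and concave if $-F$ is convex. For $\Delta\ge 0$, $f\colon\{0,\dots,n\}\to\mathbb{Z}$ is $\Delta$-near concave if there is a concave $\hat f\colon\{0,\dots,n\}\to\mathbb{Q}$ with $\hat f(i)-\Delta\le f(i)\le \hat f(i)$ for all $i$. *)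

(* Defs.v *)
From mathcomp Require Import all_boot all_order all_algebra.
Set Implicit Arguments. Unset Strict Implicit. Unset Printing Implicit Defensive.
Import Order.TTheory GRing.Theory Num.Theory.
Local Open Scope ring_scope.

(* Functions on {0,...,n} are modelled as total functions nat -> _ whose
   values outside {0,...,n} are irrelevant. *)

Definition concave_on (n : nat) (F : nat -> rat) : Prop :=
  forall i : nat, (1 <= i)%N -> (i + 1 <= n)%N ->
    F (i + 1)%N - F i <= F i - F (i - 1)%N.

Definition near_concave (n : nat) (Delta : rat) (f : nat -> int) : Prop :=
  exists fh : nat -> rat, concave_on n fh /\
    forall i : nat, (i <= n)%N -> fh i - Delta <= (f i)%:~R <= fh i.

(* The big max is seeded with the admissible term
   i = minn k n, so it equals the true maximum whenever k <= n+m. *)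
Definition maxplus_conv (n m : nat) (f g : nat -> int) (k : nat) : int :=
  \big[Num.max/ f (minn k n) + g (k - minn k n)%N]_(i < k.+1 | (i <= n)%N && (k - i <= m)%N)
     (f i + g (k - i)%N).

(* Main.v *)
Require Import Defs.
From mathcomp Require Import all_boot all_order all_algebra.
From mathcomp Require Import lra ring zify.
Import Order.TTheory GRing.Theory Num.Theory.
Set Implicit Arguments.
Local Open Scope ring_scope.

Lemma conc_step n (C : nat -> rat) : concave_on n C ->
  forall u, (u.+2 <= n)%N -> C u.+2 - C u.+1 <= C u.+1 - C u.
Proof.
move=> hC u hu; have := hC u.+1 erefl; rewrite !addn1 subn1 /=; apply; lia.
Qed.

Lemma slope_mono n (C : nat -> rat) : concave_on n C ->
  forall u k, ((u + k).+1 <= n)%N -> C (u + k)%N.+1 - C (u + k)%N <= C u.+1 - C u.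
Proof.
move=> hC u; elim=> [|k IH] hk.
  by rewrite !addn0.
rewrite !addnS; apply: le_trans (IH ltac:(lia)).
by apply: conc_step hC _ _; lia.
Qed.

Lemma sum_lb n (C : nat -> rat) : concave_on n C ->
  forall p k, ((p + k).+1 <= n)%N ->
  k%:R * (C (p + k)%N.+1 - C (p + k)%N) <= C (p + k)%N - C p.
Proof.
move=> hC p; elim=> [|k IH] hk; first by rewrite !addn0 mul0r subrr.
have h1 := IH ltac:(lia).
have h2 := slope_mono hC (p + k) 1 ltac:(lia).
rewrite addn1 in h2. rewrite addnS -[k.+1]addn1 natrD.
have h3 : 0 <= (k%:R : rat) by [].
nra.
Qed.

Lemma sum_ub n (C : nat -> rat) : concave_on n C ->
  forall t k, ((t + k) <= n)%N ->
  C (t + k)%N - C t <= k%:R * (C t.+1 - C t).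
Proof.
move=> hC t; elim=> [|k IH] hk; first by rewrite !addn0 mul0r subrr.
have h1 := IH ltac:(lia).
have h2 := slope_mono hC t k ltac:(lia).
rewrite addnS -[k.+1]addn1 natrD. lra.
Qed.

Lemma chord n (C : nat -> rat) : concave_on n C ->
  forall p t q, (p <= t)%N -> (t <= q)%N -> (q <= n)%N ->
  (q - t)%:R * C p + (t - p)%:R * C q <= (q - p)%:R * C t.
Proof.
move=> hC p t q hpt htq hqn.
have [->|tq] := eqVneq t q.
  rewrite subnn mul0r add0r; lra.
have [ep|pt] := eqVneq p t.
  rewrite ep subnn mul0r addr0; lra.
have e1 : t = (p + (t - p))%N by lia.
have e2 : q = (t + (q - t))%N by lia.
have l1 := sum_lb hC p (t - p) ltac:(lia).
have l2 := sum_ub hC t (q - t) ltac:(lia).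
rewrite -e1 in l1; rewrite -e2 in l2.
have ep : ((q - p)%:R : rat) = (q - t)%:R + (t - p)%:R by rewrite -natrD; congr _%:R; lia.
rewrite ep.
have a1 : 0 <= ((q - t)%:R : rat) by [].
have a2 : 0 <= ((t - p)%:R : rat) by [].
set m := C t.+1 - C t.
set X := C t - C p in l1. set Y := C q - C t in l2.
have : (q - t)%:R * X >= (q - t)%:R * ((t - p)%:R * m) by apply: ler_wpM2l.
have : (t - p)%:R * Y <= (t - p)%:R * ((q - t)%:R * m) by apply: ler_wpM2l.
rewrite /X /Y. nra.
Qed.
Lemma smooth n (C : nat -> rat) : concave_on n C ->
  forall x y u v, (x <= y)%N -> (y <= n)%N -> (x <= u)%N -> (u <= y)%N ->
  (u + v = x + y)%N -> C x + C y <= C u + C v.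
Proof.
move=> hC x y u v hxy hyn hxu huy e.
have h1 := chord hC x u y hxu huy hyn.
have h2 := chord hC x v y ltac:(lia) ltac:(lia) hyn.
have [exy|nxy] := eqVneq x y.
  have eu : u = x by lia. have ev : v = x by lia.
  by rewrite eu ev exy.
have e1 : ((y - u)%:R : rat) + (y - v)%:R = (y - x)%:R by rewrite -natrD; congr _%:R; lia.
have e2 : ((u - x)%:R : rat) + (v - x)%:R = (y - x)%:R by rewrite -natrD; congr _%:R; lia.
have pos : (0 : rat) < (y - x)%:R by rewrite ltr0n; lia.
have : (y - x)%:R * (C x + C y) <= (y - x)%:R * (C u + C v).
  have -> : (y - x)%:R * (C x + C y) = ((y - u)%:R * C x + (u - x)%:R * C y) + ((y - v)%:R * C x + (v - x)%:R * C y).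
    rewrite mulrDr -{1}e1 -e2; ring.
  by rewrite mulrDr; apply: lerD.
by rewrite ler_pM2l.
Qed.

Lemma smooth2 n (C : nat -> rat) : concave_on n C ->
  forall x y u v, (x <= n)%N -> (y <= n)%N -> (minn x y <= u)%N -> (u <= maxn x y)%N ->
  (u + v = x + y)%N -> C x + C y <= C u + C v.
Proof.
move=> hC x y u v hx hy h1 h2 e.
have [hxy|hxy] := leqP x y.
  apply: (smooth hC) => //; lia.
rewrite addrC; apply: (smooth hC); lia.
Qed.

Definition tight (n : nat) (phi E : nat -> rat) := forall i, (i <= n)%N ->
  E i = phi i \/ exists p q s, [/\ (p < i < q)%N, (q <= n)%N, E p = phi p,
     E q = phi q & forall t, (p <= t)%N -> (t < q)%N -> E t.+1 = E t + s].

Lemma lin (E : nat -> rat) p q s :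
  (forall t, (p <= t)%N -> (t < q)%N -> E t.+1 = E t + s) ->
  forall e, (p + e <= q)%N -> E (p + e)%N = E p + e%:R * s.
Proof.
move=> H; elim=> [|e IH] he; first by rewrite addn0 mul0r addr0.
rewrite addnS H; [|lia|lia]. rewrite IH; last lia.
rewrite -[e.+1]addn1 natrD; lra.
Qed.

Lemma minimal n (C E phi : nat -> rat) : concave_on n C ->
  (forall i, (i <= n)%N -> phi i <= C i) -> tight n phi E ->
  forall i, (i <= n)%N -> E i <= C i.
Proof.
move=> hC hm hT i hi.
case: (hT i hi) => [->|[p [q [s [/andP [hp hq] hqn Ep Eq Hs]]]]]; first exact: hm.
have l1 := @lin E p q s Hs (i - p) ltac:(lia).
have l2 := @lin E p q s Hs (q - p) ltac:(lia).
have e1 : (p + (i - p))%N = i by lia.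
have e2 : (p + (q - p))%N = q by lia.
rewrite e1 in l1; rewrite e2 in l2.
have ch := chord hC p i q (ltnW hp) (ltnW hq) hqn.
have cp := hm p ltac:(lia). have cq := hm q hqn.
rewrite Ep in l1 l2; rewrite Eq in l2.
have eq : ((q - p)%:R : rat) = (q - i)%:R + (i - p)%:R by rewrite -natrD; congr _%:R; lia.
rewrite eq in l2 ch.
set a := ((q - i)%:R : rat) in eq l2 ch.
set b := ((i - p)%:R : rat) in eq l1 l2 ch.
have ha : 0 <= a by []. have hb : 0 <= b by [].
have pos : 0 < a + b by rewrite -eq ltr0n; lia.
have : (a + b) * E i <= (a + b) * C i.
  rewrite l1. apply: le_trans ch. rewrite l2 in cq. 
  have : a * (phi p) + b * (phi p + (a + b) * s) <= a * C p + b * C q.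
    apply: lerD; apply: ler_wpM2l => //.
  have -> : (a + b) * (phi p + b * s) = a * phi p + b * (phi p + (a + b) * s) by ring.
  done.
by rewrite ler_pM2l.
Qed.

Lemma argmin (phi : nat -> rat) n : exists a, (a <= n)%N /\ forall t, (t <= n)%N -> phi a <= phi t.
Proof.
elim: n => [|n [a [ha H]]].
  exists 0%N; split => // t; rewrite leqn0 => /eqP ->; exact: lexx.
have [h|h] := leP (phi a) (phi n.+1).
  exists a; split; first lia.
  move=> t; rewrite leq_eqVlt => /orP [/eqP ->|ht] //; exact: H.
exists n.+1; split => // t; rewrite leq_eqVlt => /orP [/eqP ->|ht]; first exact: lexx.
apply: le_trans (H t ht); exact: ltW.
Qed.

Lemma hull n (phi : nat -> rat) : exists E, [/\ concave_on n E,
  forall i, (i <= n)%N -> phi i <= E i & tight n phi E].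
Proof.
elim: n => [|n [E [cE mE tE]]].
  exists phi; split.
  - move=> i h1 h2; lia.
  - move=> i _; exact: lexx.
  - by move=> i _; left.
set y := phi n.+1.
pose c (t : nat) : rat := (n.+1 - t)%:R.
pose sig t := (y - E t) / c t.
have cpos : forall t, (t <= n)%N -> 0 < c t by move=> t ht; rewrite ltr0n; lia.
have sigE : forall t, (t <= n)%N -> sig t * c t = y - E t.
  by move=> t ht; rewrite /sig divfK // gt_eqF // cpos.
have cS : forall t, (t <= n)%N -> c t = c t.+1 + 1.
  move=> t ht; rewrite /c natr1; congr _%:R; lia.
have [a0 [ha0 mina0]] := argmin sig n.
have [a [ha Ea mina]] : exists a, [/\ (a <= n)%N, E a = phi a &
    forall t, (t <= n)%N -> sig a <= sig t].
  case: (tE a0 ha0) => [e|[p [q [s [/andP [hp hq] hqn Ep Eq Hs]]]]]; first by exists a0.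
  exists p; split => //; first lia.
  suff -> : sig p = sig a0 by [].
  have em := Hs a0.-1 ltac:(lia) ltac:(lia).
  have ep := Hs a0 ltac:(lia) ltac:(lia).
  have em' : a0.-1.+1 = a0 by lia. rewrite em' in em.
  have m1 := mina0 a0.-1 ltac:(lia).
  have m2 := mina0 a0.+1 ltac:(lia).
  have s0 := sigE a0 ha0. have s1 := sigE a0.-1 ltac:(lia). have s2 := sigE a0.+1 ltac:(lia).
  have c1 := cS a0.-1 ltac:(lia). rewrite em' in c1.
  have c2 := cS a0 ha0.
  have c2pos := cpos a0.+1 ltac:(lia).
  have c1pos := cpos a0 ha0.
  have ss : sig a0 = s.
    set X := sig a0 in s0 m1 m2 *. set Xm := sig a0.-1 in s1 m1. set Xp := sig a0.+1 in s2 m2.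
    set C0 := c a0 in s0 c1 c2 c1pos. set Cm := c a0.-1 in s1 c1. set Cp := c a0.+1 in s2 c2 c2pos.
    have h1 : X * Cm <= Xm * Cm by rewrite ler_pM2r // c1; lra.
    have h2 : X * Cp <= Xp * Cp by rewrite ler_pM2r.
    rewrite c1 in h1 s1; rewrite c2 in s0.
    apply/eqP; rewrite eq_le; apply/andP; split; nra.
  have lp := @lin E p q s Hs (a0 - p) ltac:(lia).
  have e1 : (p + (a0 - p))%N = a0 by lia. rewrite e1 in lp.
  have sp := sigE p ltac:(lia).
  have cp : c p = c a0 + (a0 - p)%:R by rewrite /c -natrD; congr _%:R; lia.
  have cppos := cpos p ltac:(lia).
  rewrite ss; suff : sig p * c p = s * c p by move=> h; exact: (mulIf (lt0r_neq0 cppos)).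
  rewrite sp cp.
  rewrite ss in s0. lra.
set sg := sig a.
pose E' t := if (t <= a)%N then E t else E a + (t - a)%:R * sg.
have Ele : forall t, (t <= a)%N -> E' t = E t by move=> t h; rewrite /E' h.
have Ege : forall t, (a <= t)%N -> E' t = E a + (t - a)%:R * sg.
  move=> t h; rewrite /E'; case: leqP => h2 //.
  have -> : t = a by lia. by rewrite subnn mul0r addr0.
have Estep : forall t, (a <= t)%N -> E' t.+1 = E' t + sg.
  move=> t h; rewrite !Ege //; last lia.
  have -> : (t.+1 - a)%N = (t - a).+1 by lia.
  rewrite -natr1; ring.
have sa := sigE a ha.
have yE : E' n.+1 = y.
  rewrite Ege; last lia. rewrite mulrC. rewrite /sg sa; ring.
have above : forall t, (a <= t)%N -> (t <= n)%N -> E t <= E' t.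
  move=> t h1 h2; rewrite Ege //.
  have st := sigE t h2. have mt := mina t h2. have ct := cpos t h2.
  have cat : c a = c t + (t - a)%:R by rewrite /c -natrD; congr _%:R; lia.
  rewrite cat in sa.
  have : 0 <= (sig t - sg) * c t by apply: mulr_ge0; [rewrite subr_ge0 | apply: ltW].
  rewrite /sg in sa *; nra.
exists E'; split.
- move=> i h1 h2.
  have [hi|hi] := leqP i.+1 a.
    rewrite !Ele; try lia.
    apply: cE => //; lia.
  have [ea|na] := eqVneq i a.
    rewrite ea (Ele a) ?(Ege (a + 1)%N) ?(Ele (a - 1)%N) //; try lia.
    have -> : (a + 1 - a)%N = 1%N by lia.
    have m1 := mina a.-1 ltac:(lia). have s1 := sigE a.-1 ltac:(lia).
    have c1 := cS a.-1 ltac:(lia). have e1 : a.-1.+1 = a by lia. rewrite e1 in c1.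
    have ca := cpos a ha.
    have e2 : (a - 1)%N = a.-1 by lia. rewrite e2.
    have : sg * (c a + 1) <= sig a.-1 * (c a + 1) by rewrite ler_pM2r //; lra.
    rewrite -c1 s1 c1 mulrDr mulr1. rewrite /sg in sa *. lra.
  rewrite !Ege; try lia.
  have -> : (i + 1 - a)%N = (i - a).+1 by lia.
  have -> : (i - a)%N = (i - 1 - a).+1 by lia.
  rewrite -!natr1; lra.
- move=> i hi.
  have [hia|hia] := leqP i a.
    rewrite Ele //; apply: mE; lia.
  have [hin|hin] := leqP i n.
    apply: le_trans (above i _ hin); [exact: mE | lia].
  have -> : i = n.+1 by lia. by rewrite yE.
- move=> i hi.
  have [hin|hin] := leqP n.+1 i.
    left; have -> : i = n.+1 by lia. by rewrite yE.
  have [hia|hia] := ltnP a i.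
    right; exists a, n.+1, sg; split => //.
    + by apply/andP.
    + by rewrite Ele.
    + move=> t h1 h2; exact: Estep.
  have [eia|nia] := eqVneq i a.
    by left; rewrite eia Ele.
  have hia' : (i < a)%N by lia.
  case: (tE i ltac:(lia)) => [e|[p [q [s [/andP [hp hq] hqn Ep Eq Hs]]]]].
    by left; rewrite Ele.
  right.
  have [hqa|hqa] := leqP q a.
    exists p, q, s; split.
    + by apply/andP.
    + lia.
    + by rewrite Ele //; lia.
    + by rewrite Ele.
    + move=> t h1 h2; rewrite !Ele; try lia. exact: Hs.
  exists p, a, s; split.
  + by apply/andP.
  + lia.
  + by rewrite Ele //; lia.
  + by rewrite Ele.
  + move=> t h1 h2; rewrite !Ele; try lia. apply: Hs; lia.
Qed.

Lemma bigmax_ub (R : realDomainType) k (P : pred nat) (F : nat -> R) x0 i :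
  (i < k.+1)%N -> P i -> F i <= \big[Num.max/x0]_(j < k.+1 | P j) F j.
Proof.
move=> hi hP; rewrite (bigD1 (Ordinal hi)) //=.
by rewrite le_max lexx.
Qed.

Lemma bigmax_att (R : realDomainType) k (P : pred nat) (F : nat -> R) x0 :
  \big[Num.max/x0]_(j < k.+1 | P j) F j = x0 \/
  exists i, [/\ (i < k.+1)%N, P i & \big[Num.max/x0]_(j < k.+1 | P j) F j = F i].
Proof.
set B := \big[_/_]_(_ < _ | _) _.
have : B = x0 \/ exists i, [/\ (i < k.+1)%N, P i & B = F i]; last by [].
rewrite /B; apply: (big_ind (fun b => b = x0 \/ exists i, [/\ (i < k.+1)%N, P i & b = F i])).
- by left.
- move=> x y hx hy; have [h|h] := leP x y.
  + exact: hy.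
  + exact: hx.
- move=> j hj; right; exists j; split => //.
Qed.

Theorem mainTheorem5 (n m : nat) (f g : nat -> int) (Df Dg : rat) :
  0 <= Df -> 0 <= Dg ->
  near_concave n Df f -> near_concave m Dg g ->
  near_concave (n + m) (Num.max Df Dg) (maxplus_conv n m f g).
Proof.
move=> _ _ [fh [cfh bfh]] [gh [cgh bgh]].
pose f' i : rat := (f i)%:~R. pose g' i : rat := (g i)%:~R.
have [F [cF mF tF]] := hull n f'.
have [G [cG mG tG]] := hull m g'.
have Fle := minimal cfh (fun i hi => proj2 (andP (bfh i hi))) tF.
have Gle := minimal cgh (fun i hi => proj2 (andP (bgh i hi))) tG.
have Flo : forall i, (i <= n)%N -> F i - Df <= f' i.
  move=> i hi; have := Fle i hi; have /andP [h1 _] := bfh i hi; rewrite /f'; lra.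
have Glo : forall i, (i <= m)%N -> G i - Dg <= g' i.
  move=> i hi; have := Gle i hi; have /andP [h1 _] := bgh i hi; rewrite /g'; lra.
pose H k := \big[Num.max/ F (minn k n) + G (k - minn k n)%N]_(i < k.+1 | (i <= n)%N && (k - i <= m)%N)
     (F i + G (k - i)%N).
have Hub : forall k i, (i <= k)%N -> (i <= n)%N -> (k - i <= m)%N -> F i + G (k - i)%N <= H k.
  move=> k i h1 h2 h3.
  apply: (@bigmax_ub _ k (fun i => (i <= n)%N && (k - i <= m)%N) (fun i => F i + G (k - i)%N) _ i) => //.
  by rewrite h2 h3.
have Hatt : forall k, (k <= n + m)%N -> exists i, [/\ (i <= k)%N, (i <= n)%N, (k - i <= m)%N &
    H k = F i + G (k - i)%N].
  move=> k hk.
  case: (@bigmax_att _ k (fun i => (i <= n)%N && (k - i <= m)%N) (fun i => F i + G (k - i)%N)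
           (F (minn k n) + G (k - minn k n)%N)) => [e|[i [h1 /andP [h2 h3] e]]].
  + exists (minn k n); split; [lia|lia|lia|exact: e].
  + exists i; split => //.
have hub : forall k i, (i <= k)%N -> (i <= n)%N -> (k - i <= m)%N ->
    f i + g (k - i)%N <= maxplus_conv n m f g k.
  move=> k i h1 h2 h3.
  apply: (@bigmax_ub _ k (fun i => (i <= n)%N && (k - i <= m)%N) (fun i => f i + g (k - i)%N) _ i) => //.
  by rewrite h2 h3.
have hatt : forall k, (k <= n + m)%N -> exists i, [/\ (i <= k)%N, (i <= n)%N, (k - i <= m)%N &
    maxplus_conv n m f g k = f i + g (k - i)%N].
  move=> k hk.
  case: (@bigmax_att _ k (fun i => (i <= n)%N && (k - i <= m)%N) (fun i => f i + g (k - i)%N)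
           (f (minn k n) + g (k - minn k n)%N)) => [e|[i [h1 /andP [h2 h3] e]]].
  + exists (minn k n); split; [lia|lia|lia|exact: e].
  + exists i; split => //.
have Htight : forall k, (k <= n + m)%N -> exists i, [/\ (i <= k)%N, (i <= n)%N, (k - i <= m)%N,
    H k = F i + G (k - i)%N & F i = f' i \/ G (k - i)%N = g' (k - i)%N].
  move=> k hk; have [i [h1 h2 h3 e]] := Hatt k hk.
  case: (tF i h2) => [ef|[p [q [s [/andP [hp hq] hqn Ep Eq Hs]]]]].
    by exists i; split => //; left.
  case: (tG (k - i)%N h3) => [eg|[r [w [s' [/andP [hr hw] hwm Er Ew Hs']]]]].
    by exists i; split => //; right.
  have m1 := Hub k i.+1 ltac:(lia) ltac:(lia) ltac:(lia).
  have m2 := Hub k i.-1 ltac:(lia) ltac:(lia) ltac:(lia).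
  have f1 := Hs i ltac:(lia) ltac:(lia).
  have f2 := Hs i.-1 ltac:(lia) ltac:(lia).
  have g1 := Hs' (k - i.+1)%N ltac:(lia) ltac:(lia).
  have g2 := Hs' (k - i)%N ltac:(lia) ltac:(lia).
  have e1 : (k - i.+1).+1 = (k - i)%N by lia.
  have e2 : i.-1.+1 = i by lia.
  have e3 : (k - i.-1)%N = (k - i).+1 by lia.
  rewrite e1 in g1; rewrite e2 in f2; rewrite e3 in m2.
  have ss : s = s'.
    apply/eqP; rewrite eq_le; apply/andP; split; lra.
  pose d := minn (q - i) (k - i - r).
  have lf := @lin F i q s (fun t h1 h2 => Hs t ltac:(lia) h2) d ltac:(lia).
  have lg := @lin G (k - i - d)%N w s' (fun t h1 h2 => Hs' t ltac:(lia) h2) d ltac:(lia).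
  have e4 : (k - i - d + d)%N = (k - i)%N by lia.
  rewrite e4 in lg.
  have e5 : (k - (i + d))%N = (k - i - d)%N by lia.
  exists (i + d)%N; split; [lia|lia|lia| |].
  - rewrite e e5 lf lg ss; ring.
  - rewrite /d; case: (leqP (q - i) (k - i - r)) => hd.
    + left; have -> : (i + (q - i))%N = q by lia. exact: Eq.
    + right; have -> : (k - (i + (k - i - r)))%N = r by lia. exact: Er.
have cH : concave_on (n + m) H.
  move=> k h1 h2.
  have [i1 [a1 b1 c1 e1]] := Hatt (k - 1)%N ltac:(lia).
  have [i2 [a2 b2 c2 e2]] := Hatt (k + 1)%N ltac:(lia).
  pose u := ((i1 + i2) %/ 2)%N. pose v := (i1 + i2 - u)%N.
  have sF := smooth2 cF i1 i2 u v b1 b2 ltac:(lia) ltac:(lia) ltac:(lia).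
  have sG := smooth2 cG (k - 1 - i1)%N (k + 1 - i2)%N (k - u)%N (k - v)%N
     c1 c2 ltac:(lia) ltac:(lia) ltac:(lia).
  have hu := Hub k u ltac:(lia) ltac:(lia) ltac:(lia).
  have hv := Hub k v ltac:(lia) ltac:(lia) ltac:(lia).
  rewrite e1 e2. lra.
exists H; split => // k hk.
have [i [a1 b1 c1 e1]] := hatt k hk.
have [j [a2 b2 c2 e2 t2]] := Htight k hk.
have hu := hub k j a2 b2 c2.
apply/andP; split.
- have hu' : f' j + g' (k - j)%N <= (maxplus_conv n m f g k)%:~R.
    by rewrite /f' /g' -intrD ler_int.
  have dm1 : Df <= Num.max Df Dg by rewrite le_max lexx.
  have dm2 : Dg <= Num.max Df Dg by rewrite le_max lexx orbT.
  have l1 := Flo j b2. have l2 := Glo (k - j)%N c2.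
  rewrite e2. case: t2 => [t|t]; rewrite t in l1 l2 *; lra.
- rewrite e1 intrD. have := Hub k i a1 b1 c1.
  have := mF i b1. have := mG (k - i)%N c1. rewrite /f' /g'. lra.
Qed.
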